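(* In the setting of the imitative spectrum access dynamics, suppose the information sharing graph (equivalently, the cluster-based graph) is connected, and let $\boldsymbol{X}^*$ be an imitation equilibrium satisfying $U(m,\boldsymbol{X}^* )=U(i,\boldsymbol{X}^* )$ for all $m,i\in\Delta_k(\boldsymbol{X}^* )$ and all clusters $k$. Then all users achieve the same expected throughput: $U(a^*_n,\boldsymbol{X}^* )=U(a^*_{n'},\boldsymbol{X}^* )$ for all users $n,n'\in\mathcal{N}$, where $a^*_n$ is the channel chosen by user $n$ at $\boldsymbol{X}^*$. Equivalently, $U(m,\boldsymbol{X}^* )=U(i,\boldsymbol{X}^* )$ for all channels $m,i$ used by some user at $\boldsymbol{X}^*$.
   Context: There are $K$ clusters with sizes $z_k>0$ forming an undirected cluster-based graph; $\mathcal{C}_k$ is the set consisting of cluster $k$ and its neighboring clusters. A population state $\boldsymbol{X}=(\boldsymbol{X}^1,\dots,\boldsymbol{X}^K)$ has $X^k_m\ge0$, $\sum_mX^k_m=1$. $U(m,\boldsymbol{X})=\theta_mB_m\,g\big(\sum_kz_kX^k_m\big)$ is the expected throughput of a user on channel $m$, where $\theta_m\in(0,1)$, $B_m>0$ and $g(x)=\sum_{\lambda=1}^{\lambda_{\max}}\frac{1}{\lambda_{\max}}\left(\frac{\lambda_{\max}-\lambda}{\lambda_{\max}}\right)^{x-1}$. $\Delta_k(\boldsymbol{X}^* )=\{m: X^{h*}_m>0\text{ for some }h\in\mathcal{C}_k\}$. *)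

(* Defs.v *)
From Stdlib Require Import Reals Lra Relations.
Open Scope R_scope.

Fixpoint sumR (n : nat) (f : nat -> R) : R :=
  match n with
  | O => 0
  | S n' => sumR n' f + f n'
  end.

(* Real power b^y for a base b >= 0, with the convention 0^0 = 1 and
   0^y = 0 for y <> 0 (only used with b = 0 when lambda = lambda_max). *)
Definition rpow (b y : R) : R :=
  if Rle_dec b 0 then (if Req_EM_T y 0 then 1 else 0) else Rpower b y.

Definition g (lmax : nat) (x : R) : R :=
  sumR lmax (fun j => let lam := INR (S j) in
     / INR lmax * rpow ((INR lmax - lam) / INR lmax) (x - 1)).

(* Clusters are 0..K-1, channels are 0..M-1; a population state is
   X : nat -> nat -> R with X k m = X^k_m. *)

Definition U (K lmax : nat) (theta B z : nat -> R) (X : nat -> nat -> R)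
  (m : nat) : R :=
  theta m * B m * g lmax (sumR K (fun k => z k * X k m)).

Definition sym_graph (K : nat) (adj : nat -> nat -> Prop) : Prop :=
  forall a b, (a < K)%nat -> (b < K)%nat -> adj a b -> adj b a.

Definition graph_connected (K : nat) (adj : nat -> nat -> Prop) : Prop :=
  forall a b, (a < K)%nat -> (b < K)%nat ->
    clos_refl_trans nat (fun u v => (u < K)%nat /\ (v < K)%nat /\ adj u v) a b.

Definition pop_state (K M : nat) (X : nat -> nat -> R) : Prop :=
  forall k, (k < K)%nat ->
    (forall m, (m < M)%nat -> 0 <= X k m) /\ sumR M (fun m => X k m) = 1.

Definition inC (K : nat) (adj : nat -> nat -> Prop) (k h : nat) : Prop :=
  (h < K)%nat /\ (h = k \/ adj k h).

Definition inDelta (K M : nat) (adj : nat -> nat -> Prop)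
  (X : nat -> nat -> R) (k m : nat) : Prop :=
  (m < M)%nat /\ exists h, inC K adj k h /\ 0 < X h m.

Definition used (K M : nat) (X : nat -> nat -> R) (m : nat) : Prop :=
  (m < M)%nat /\ exists k, (k < K)%nat /\ 0 < X k m.

(* Main.v *)
Require Import Defs.
From Stdlib Require Import Reals Relations Lra Lia.
Open Scope R_scope.

Lemma sumR_pos_ex (n : nat) (f : nat -> R) :
  0 < sumR n f -> exists m, (m < n)%nat /\ 0 < f m.
Proof.
  induction n as [|n IH]; simpl; intros H.
  - lra.
  - destruct (Rlt_dec 0 (f n)) as [Hp|Hp].
    + exists n; split; [lia|lra].
    + destruct IH as [m [Hm Hf]]; [lra|]. exists m; split; [lia|lra].
Qed.

Theorem corollary1
  (K M lmax : nat) (z theta B : nat -> R) (adj : nat -> nat -> Prop)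
  (X : nat -> nat -> R)
  (Hlmax : (1 <= lmax)%nat)
  (Hz : forall k, (k < K)%nat -> 0 < z k)
  (Htheta : forall m, (m < M)%nat -> 0 < theta m < 1)
  (HB : forall m, (m < M)%nat -> 0 < B m)
  (Hsym : sym_graph K adj)
  (Hconn : graph_connected K adj)
  (HX : pop_state K M X)
  (Heq : forall k m i, (k < K)%nat ->
      inDelta K M adj X k m -> inDelta K M adj X k i ->
      U K lmax theta B z X m = U K lmax theta B z X i) :
  forall m i, used K M X m -> used K M X i ->
    U K lmax theta B z X m = U K lmax theta B z X i.
Proof.
  assert (Hex : forall k, (k < K)%nat -> exists c, (c < M)%nat /\ 0 < X k c).
  { intros k Hk. destruct (HX k Hk) as [_ Hs]. apply (sumR_pos_ex M (fun m => X k m)). lra. }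
  assert (Key : forall a b,
    clos_refl_trans nat (fun u v => (u < K)%nat /\ (v < K)%nat /\ adj u v) a b ->
    (a < K)%nat -> (b < K)%nat ->
    forall m i, (m < M)%nat -> 0 < X a m -> (i < M)%nat -> 0 < X b i ->
    U K lmax theta B z X m = U K lmax theta B z X i).
  { intros a b Hr. induction Hr as [x y [Hx [Hy Ha]]| x | x y w H1 IH1 H2 IH2];
      intros Ha' Hb' m i Hm Xm Hi Xi.
    - apply (Heq x); auto.
      + split; auto. exists x; split; [split; auto|auto].
      + split; auto. exists y; split; [split; auto|auto].
    - apply (Heq x); auto.
      + split; auto. exists x; split; [split; auto|auto].
      + split; auto. exists x; split; [split; auto|auto].
    - assert (Hy : (y < K)%nat).
      { clear -H1 Ha'. revert Ha'. induction H1 as [u v [_ [Hv _]]| |]; auto. }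
      destruct (Hex y Hy) as [c [Hc Xc]].
      rewrite (IH1 Ha' Hy m c Hm Xm Hc Xc).
      apply (IH2 Hy Hb' c i Hc Xc Hi Xi). }
  intros m i [Hm [k1 [Hk1 X1]]] [Hi [k2 [Hk2 X2]]].
  exact (Key k1 k2 (Hconn k1 k2 Hk1 Hk2) Hk1 Hk2 m i Hm X1 Hi X2).
Qed.
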